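(* Let $(X,d)$ be a metric space and $f:\ell_\infty(X)\to X$. The following are equivalent: (i) there is $q\in(0,1)$ with $L_{s,q}(f)<1$; (ii) there are $q\in(0,1)$ and $p\in[1,\infty)$ with $L_{p,q}(f)<(1-q)^{1/p}$; (iii) for every $q\in(0,1)$ there exists $p\in[1,\infty)$ with $L_{p,q}(f)<(1-q)^{1/p}$.
   Context: $\mathbb{N}^*=\{0,1,2,\dots\}$; $\ell_\infty(X)$ is the set of all bounded sequences $(x_n)_{n\in\mathbb{N}^*}$ in $X$. For $q\in(0,1]$, $d_{s,q}(x,y):=\sup\{q^n d(x_n,y_n):n\in\mathbb{N}^*\}$; for $q\in(0,1)$, $p\in[1,\infty)$, $d_{p,q}(x,y):=\left(\sum_{n=0}^\infty q^n d^p(x_n,y_n)\right)^{1/p}$. $L_{s,q}(f)$, $L_{p,q}(f)$ are the Lipschitz constants (possibly $\infty$) of $f$ with respect to $d_{s,q}$, resp. $d_{p,q}$, on $\ell_\infty(X)$ and $d$ on $X$. *)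

(* Defs.v *)
From Stdlib Require Export Reals.
Open Scope R_scope.

Definition is_metric {X : Type} (d : X -> X -> R) : Prop :=
  (forall x y, 0 <= d x y) /\
  (forall x y, d x y = 0 <-> x = y) /\
  (forall x y, d x y = d y x) /\
  (forall x y z, d x z <= d x y + d y z).

Definition bounded_seq {X : Type} (d : X -> X -> R) (x : nat -> X) : Prop :=
  exists M, forall n m, d (x n) (x m) <= M.

(* a^b for a >= 0, b > 0, with the convention 0^b = 0. *)
Definition rpow (a b : R) : R := if Rle_dec a 0 then 0 else Rpower a b.

(* Set {q^n d(x_n,y_n) : n}; d_{s,q}(x,y) is its supremum. *)
Definition dsq_set {X : Type} (d : X -> X -> R) (q : R) (x y : nat -> X) : R -> Prop :=
  fun r => exists n, r = q ^ n * d (x n) (y n).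

Definition lip_s {X : Type} (d : X -> X -> R) (q : R) (f : (nat -> X) -> X) (L : R) : Prop :=
  forall x y, bounded_seq d x -> bounded_seq d y ->
  forall s, is_lub (dsq_set d q x y) s -> d (f x) (f y) <= L * s.

Definition lip_p {X : Type} (d : X -> X -> R) (p q : R) (f : (nat -> X) -> X) (L : R) : Prop :=
  forall x y, bounded_seq d x -> bounded_seq d y ->
  forall S, infinite_sum (fun n => q ^ n * rpow (d (x n) (y n)) p) S ->
  d (f x) (f y) <= L * rpow S (1 / p).

(* Main.v *)
Require Import Defs.
From Stdlib Require Import Reals Lra Lia.
Open Scope R_scope.

Lemma exp_le' x y : x <= y -> exp x <= exp y.
Proof. intros [H|H]; [left; apply exp_increasing; auto | subst; lra]. Qed.
Lemma ln_le' x y : 0 < x -> x <= y -> ln x <= ln y.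
Proof. intros Hx [H|H]; [left; apply ln_increasing; auto| subst; lra]. Qed.
Lemma rpow_pos_eq a b : 0 < a -> rpow a b = exp (b * ln a).
Proof. intros Ha. unfold rpow. destruct (Rle_dec a 0); [lra|]. reflexivity. Qed.
Lemma rpow_nonneg a b : 0 <= rpow a b.
Proof. unfold rpow. destruct (Rle_dec a 0); [lra| unfold Rpower; left; apply exp_pos]. Qed.
Lemma rpow_posv a b : 0 < a -> 0 < rpow a b.
Proof. intros. rewrite rpow_pos_eq; auto; apply exp_pos. Qed.
Lemma rpow_le a b p : 0 <= p -> a <= b -> rpow a p <= rpow b p.
Proof. intros Hp Hab. destruct (Rle_dec a 0) as [Ha|Ha].
 - unfold rpow at 1. destruct (Rle_dec a 0); [apply rpow_nonneg| contradiction].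
 - rewrite !rpow_pos_eq by lra. apply exp_le'. apply Rmult_le_compat_l; auto. apply ln_le'; lra. Qed.
Lemma rpow_zero p : rpow 0 p = 0.
Proof. unfold rpow. destruct (Rle_dec 0 0); lra. Qed.
Lemma rpow_nat a N : 0 <= a -> (1 <= N)%nat -> rpow a (INR N) = a ^ N.
Proof. intros Ha HN. destruct (Req_dec a 0) as [->|Ha'].
 - rewrite rpow_zero, pow_i; [reflexivity| lia].
 - unfold rpow. destruct (Rle_dec a 0); [lra|]. apply Rpower_pow. lra. Qed.

Lemma root_le a S N : 0 <= a -> a ^ N <= S -> (1 <= N)%nat -> a <= rpow S (1 / INR N).
Proof. intros Ha HS HN. assert (HN' : 1 <= INR N) by (apply (le_INR 1); lia).
 destruct (Req_dec a 0) as [->|Ha']. apply rpow_nonneg.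
 assert (0 < a ^ N) by (apply pow_lt; lra).
 rewrite rpow_pos_eq by lra. rewrite <- (exp_ln a) at 1 by lra. apply exp_le'.
 assert (H1 : ln (a ^ N) <= ln S) by (apply ln_le'; lra). rewrite ln_pow in H1 by lra.
 apply (Rmult_le_reg_l (INR N)); [lra|].
 replace (INR N * (1 / INR N * ln S)) with (ln S) by (field; lra). lra. Qed.

Lemma root_lt a S N : 0 <= a -> a ^ N < S -> (1 <= N)%nat -> a < rpow S (1 / INR N).
Proof. intros Ha HS HN. assert (HN' : 1 <= INR N) by (apply (le_INR 1); lia).
 assert (0 <= a ^ N) by (apply pow_le; lra).
 destruct (Req_dec a 0) as [->|Ha']. apply rpow_posv; lra.
 assert (0 < a ^ N) by (apply pow_lt; lra).
 rewrite rpow_pos_eq by lra. rewrite <- (exp_ln a) at 1 by lra. apply exp_increasing.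
 assert (H1 : ln (a ^ N) < ln S) by (apply ln_increasing; lra). rewrite ln_pow in H1 by lra.
 apply (Rmult_lt_reg_l (INR N)); [lra|].
 replace (INR N * (1 / INR N * ln S)) with (ln S) by (field; lra). lra. Qed.

Lemma term_le_sum f n : (forall k, 0 <= f k) -> f n <= sum_f_R0 f n.
Proof. intros H. destruct n; simpl; [lra|]. pose proof (cond_pos_sum f n H). lra. Qed.
Lemma sum_le_lim f l : (forall k, 0 <= f k) -> infinite_sum f l -> forall n, f n <= l.
Proof. intros H Hl n. eapply Rle_trans. apply term_le_sum; auto. apply sum_incr; auto. Qed.
Lemma lim_nonneg f l : (forall k, 0 <= f k) -> infinite_sum f l -> 0 <= l.
Proof. intros H Hl. pose proof (sum_le_lim f l H Hl 0%nat). pose proof (H 0%nat). lra. Qed.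
Lemma lim_le_bound u l M : Un_cv u l -> (forall n, u n <= M) -> l <= M.
Proof. intros H HM. destruct (Rle_or_lt l M); auto. exfalso.
 destruct (H (l - M)) as [N HN]; [lra|]. specialize (HN N (le_n N)). unfold Rdist, Rabs in HN.
 specialize (HM N). destruct (Rcase_abs (u N - l)); lra. Qed.

Lemma dn_bound X (d: X->X->R) (Hd: is_metric d) x y : bounded_seq d x -> bounded_seq d y ->
  exists B, forall n, d (x n) (y n) <= B.
Proof. intros [Mx Hx] [My Hy]. destruct Hd as [H0 [H1 [Hs Ht]]].
 exists (Mx + d (x 0%nat) (y 0%nat) + My). intros n.
 pose proof (Ht (x n) (x 0%nat) (y n)). pose proof (Ht (x 0%nat) (y 0%nat) (y n)).
 pose proof (Hx n 0%nat). pose proof (Hy 0%nat n). lra. Qed.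

Lemma lub_exists X (d: X->X->R) (Hd: is_metric d) q x y : 0 < q < 1 -> bounded_seq d x -> bounded_seq d y ->
  exists s, is_lub (dsq_set d q x y) s.
Proof. intros Hq Hx Hy. destruct (dn_bound X d Hd x y Hx Hy) as [B HB].
 destruct (completeness (dsq_set d q x y)) as [s Hs].
 - exists B. intros r [n ->]. assert (0 <= d (x n) (y n)) by apply Hd.
   assert (q ^ n <= 1) by (rewrite <- (pow1 n); apply pow_incr; lra).
   assert (0 <= q ^ n) by (apply pow_le; lra). specialize (HB n). nra.
 - exists (q ^ 0 * d (x 0%nat) (y 0%nat)). exists 0%nat. reflexivity.
 - exists s; exact Hs. Qed.

Lemma lub_nonneg X (d: X->X->R) (Hd: is_metric d) q x y s : is_lub (dsq_set d q x y) s -> 0 <= s.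
Proof. intros [H _]. assert (H0 := H (q ^ 0 * d (x 0%nat) (y 0%nat)) (ex_intro _ 0%nat eq_refl)).
 assert (0 <= d (x 0%nat) (y 0%nat)) by apply Hd. simpl in H0. lra. Qed.

Lemma s_to_p X (d: X->X->R) (Hd : is_metric d) f q1 L q N :
  0 < q1 < 1 -> 0 <= L -> lip_s d q1 f L -> (1 <= N)%nat -> 0 < q < 1 -> q1 ^ N <= q ->
  lip_p d (INR N) q f L.
Proof.
  intros Hq1 HL Hf HN Hq HqN x y Hx Hy S HS.
  destruct (lub_exists X d Hd q1 x y Hq1 Hx Hy) as [s Hs].
  eapply Rle_trans. apply (Hf x y Hx Hy s Hs).
  apply Rmult_le_compat_l; auto.
  destruct Hs as [Hub Hleast]. apply Hleast. intros r [n ->].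
  assert (Hd0: 0 <= d (x n) (y n)) by (apply Hd).
  apply root_le; auto. apply Rmult_le_pos; [apply pow_le; lra| auto].
  assert (Hterm: forall k, 0 <= q^k * rpow (d (x k) (y k)) (INR N))
    by (intros; apply Rmult_le_pos; [apply pow_le; lra| apply rpow_nonneg]).
  eapply Rle_trans; [| apply (sum_le_lim _ S Hterm HS n)].
  rewrite Rpow_mult_distr, <- pow_mult, Nat.mul_comm, pow_mult, rpow_nat by auto.
  apply Rmult_le_compat_r. apply pow_le; auto.
  apply pow_incr. split; auto. apply pow_le; lra.
Qed.

Lemma p_to_s X (d: X->X->R) (Hd : is_metric d) f q p L q' :
  0 < q < 1 -> 1 <= p -> 0 <= L -> lip_p d p q f L -> 0 < q' < 1 -> q < rpow q' p ->
  lip_s d q' f (L / rpow (1 - q / rpow q' p) (1/p)).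
Proof.
  intros Hq Hp HL Hf Hq' Hqt x y Hx Hy s Hs.
  set (t := rpow q' p) in *.
  assert (Ht : t = exp (p * ln q')) by (apply rpow_pos_eq; lra).
  assert (Htp : 0 < t) by (rewrite Ht; apply exp_pos).
  set (r := q / t).
  assert (Hr : 0 < r < 1).
  { unfold r. split. apply Rdiv_lt_0_compat; lra.
    apply (Rmult_lt_reg_r t); auto. unfold Rdiv. rewrite Rmult_assoc, Rinv_l by lra. lra. }
  set (K := rpow s p).
  assert (HK : 0 <= K) by apply rpow_nonneg.
  assert (Hs0 : 0 <= s) by (eapply lub_nonneg; eauto).
  set (a := fun n => q ^ n * rpow (d (x n) (y n)) p).
  assert (Ha: forall n, 0 <= a n)
    by (intros; apply Rmult_le_pos; [apply pow_le; lra| apply rpow_nonneg]).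
  assert (Hab: forall n, a n <= K * r ^ n).
  { intros n. unfold a.
    assert (Hd0: 0 <= d (x n) (y n)) by (apply Hd).
    destruct (Req_dec (d (x n) (y n)) 0) as [E|E].
    - rewrite E, rpow_zero, Rmult_0_r. apply Rmult_le_pos; auto. apply pow_le; lra.
    - assert (Hdp : 0 < d (x n) (y n)) by lra.
      assert (Hqn : 0 < q' ^ n) by (apply pow_lt; lra).
      assert (Hle : q' ^ n * d (x n) (y n) <= s) by (apply Hs; exists n; reflexivity).
      assert (Hsp : 0 < s) by (assert (0 < q' ^ n * d (x n) (y n)) by (apply Rmult_lt_0_compat; auto); lra).
      assert (E2 : ln (q'^n * d (x n) (y n)) <= ln s) by (apply ln_le'; auto; apply Rmult_lt_0_compat; auto).
      rewrite ln_mult, ln_pow in E2 by lra.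
      assert (Hm : p * (INR n * ln q' + ln (d (x n) (y n))) <= p * ln s) by (apply Rmult_le_compat_l; lra).
      unfold K. rewrite !rpow_pos_eq by lra.
      unfold r, Rdiv. rewrite Rpow_mult_distr, pow_inv.
      assert (Htn : t ^ n = exp (INR n * (p * ln q'))).
      { rewrite <- Rpower_pow by lra. unfold Rpower. rewrite Ht, ln_exp. reflexivity. }
      rewrite Htn.
      assert (Ee : exp (p * ln s - INR n * (p * ln q')) = exp (p * ln s) * / exp (INR n * (p * ln q')))
        by (unfold Rminus; rewrite exp_plus, exp_Ropp; ring).
      replace (exp (p * ln s) * (q ^ n * / exp (INR n * (p * ln q'))))
        with (q ^ n * exp (p * ln s - INR n * (p * ln q'))) by (rewrite Ee; ring).
      apply Rmult_le_compat_l. apply pow_le; lra.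
      apply exp_le'. nra. }
  assert (Hpart: forall n, sum_f_R0 a n <= K / (1 - r)).
  { intro n. eapply Rle_trans. apply (sum_Rle a (fun i => r ^ i * K)). intros; rewrite Rmult_comm; auto.
    rewrite <- scal_sum, tech3 by lra.
    assert (0 <= r ^ S n) by (apply pow_le; lra).
    assert (0 < / (1 - r)) by (apply Rinv_0_lt_compat; lra).
    unfold Rdiv. rewrite <- Rmult_assoc. apply Rmult_le_compat_r; [lra|]. nra. }
  destruct (growing_cv (fun n => sum_f_R0 a n)) as [l Hl].
  { intro n. simpl. pose proof (Ha (S n)). lra. }
  { exists (K / (1 - r)). intros z [i ->]. apply Hpart. }
  assert (HS : infinite_sum a l) by exact Hl.
  assert (Hl0 : 0 <= l) by (eapply lim_nonneg; eauto).
  assert (HlK : l <= K / (1 - r)) by (eapply lim_le_bound; eauto).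
  eapply Rle_trans. apply (Hf x y Hx Hy l HS).
  set (C := rpow (1 - q / t) (1 / p)).
  assert (HC : 0 < C) by (apply rpow_posv; fold r; lra).
  assert (Hkey : rpow l (1/p) <= s / C).
  { destruct (Req_dec l 0) as [->|Hl'].
    - rewrite rpow_zero. apply Rmult_le_pos; auto. left; apply Rinv_0_lt_compat; auto.
    - assert (Hlp : 0 < l) by lra.
      assert (HKp : 0 < K / (1 - r)) by lra.
      assert (HKp' : 0 < K).
      { assert (0 < / (1 - r)) by (apply Rinv_0_lt_compat; lra).
        unfold Rdiv in HKp. destruct HK as [HK|HK]; auto. rewrite <- HK in HKp. lra. }
      assert (Hsp : 0 < s).
      { destruct Hs0 as [|E]; auto. unfold K in HKp'. rewrite <- E, rpow_zero in HKp'. lra. }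
      eapply Rle_trans. apply rpow_le; [|apply HlK]. left; apply Rdiv_lt_0_compat; lra.
      rewrite rpow_pos_eq by auto. unfold C. fold r. rewrite rpow_pos_eq by lra.
      change (K / (1 - r)) with (K * / (1 - r)). rewrite ln_mult, ln_Rinv by (try apply Rinv_0_lt_compat; lra).
      unfold K. rewrite rpow_pos_eq, ln_exp by lra.
      replace (1 / p * (p * ln s + - ln (1 - r))) with (ln s + - (1 / p * ln (1 - r))) by (field; lra).
      rewrite exp_plus, exp_Ropp, exp_ln by lra. right; reflexivity. }
  change (rpow (1 - r) (1 / p)) with C. replace (L / C * s) with (L * (s / C)) by (field; lra).
  apply Rmult_le_compat_l; auto.
Qed.

Lemma lip_p_mono X (d: X->X->R) p q f L L' : L <= L' -> lip_p d p q f L -> lip_p d p q f L'.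
Proof. intros HL Hf x y Hx Hy S HS. eapply Rle_trans. apply (Hf x y Hx Hy S HS).
 apply Rmult_le_compat_r; auto. apply rpow_nonneg. Qed.

Lemma lip_s_mono X (d: X->X->R) (Hd : is_metric d) q f L L' : L <= L' -> lip_s d q f L -> lip_s d q f L'.
Proof. intros HL Hf x y Hx Hy s Hs. eapply Rle_trans. apply (Hf x y Hx Hy s Hs).
 apply Rmult_le_compat_r; auto. eapply lub_nonneg; eauto. Qed.

Lemma p_to_s_ex X (d: X->X->R) (Hd : is_metric d) f q p L :
  0 < q < 1 -> 1 <= p -> L < Rpower (1 - q) (1 / p) -> lip_p d p q f L ->
  exists q', 0 < q' < 1 /\ exists L', 0 <= L' /\ L' < 1 /\ lip_s d q' f L'.
Proof.
  intros Hq Hp HL Hf.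
  assert (HR : 0 < Rpower (1 - q) (1 / p)) by apply exp_pos.
  set (L0 := Rmax L (Rpower (1 - q) (1 / p) / 2)).
  assert (HL0 : 0 < L0) by (eapply Rlt_le_trans; [|apply Rmax_r]; lra).
  assert (HL0' : L0 < Rpower (1 - q) (1 / p)) by (apply Rmax_lub_lt; lra).
  assert (Hf0 : lip_p d p q f L0) by (eapply lip_p_mono; [apply Rmax_l|]; eauto).
  set (m := rpow L0 p).
  assert (Hm0 : 0 < m) by (apply rpow_posv; auto).
  assert (Hm : m < 1 - q).
  { unfold m. rewrite rpow_pos_eq by auto. rewrite <- (exp_ln (1 - q)) by lra.
    apply exp_increasing. unfold Rpower in HL0'.
    apply ln_increasing in HL0'; auto. rewrite ln_exp in HL0'.
    assert (p * ln L0 < p * (1 / p * ln (1 - q))) by (apply Rmult_lt_compat_l; lra).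
    replace (p * (1 / p * ln (1 - q))) with (ln (1 - q)) in H by (field; lra). lra. }
  set (t := (q / (1 - m) + 1) / 2).
  assert (Hqm : q <= q / (1 - m)).
  { apply (Rmult_le_reg_r (1 - m)); [lra|]. unfold Rdiv. rewrite Rmult_assoc, Rinv_l by lra. nra. }
  assert (Hqm1 : q / (1 - m) < 1).
  { apply (Rmult_lt_reg_r (1 - m)); [lra|]. unfold Rdiv. rewrite Rmult_assoc, Rinv_l by lra. lra. }
  assert (Ht : q < t < 1) by (unfold t; lra).
  assert (Htm : q < t * (1 - m)).
  { assert (q / (1 - m) * (1 - m) < t * (1 - m)) by (apply Rmult_lt_compat_r; unfold t; lra).
    unfold Rdiv in H. rewrite Rmult_assoc, Rinv_l in H by lra. lra. }
  set (q' := rpow t (1 / p)).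
  assert (Hq'e : q' = exp (1 / p * ln t)) by (apply rpow_pos_eq; lra).
  assert (Hlnt : ln t < 0) by (rewrite <- ln_1; apply ln_increasing; lra).
  assert (Hq' : 0 < q' < 1).
  { rewrite Hq'e. split. apply exp_pos.
    assert (0 < 1 / p) by (apply Rdiv_lt_0_compat; lra).
    assert (Hn : 1 / p * ln t < 0) by nra.
    pose proof (exp_increasing _ _ Hn) as He. rewrite exp_0 in He. exact He. }
  assert (Htq : rpow q' p = t).
  { rewrite rpow_pos_eq by lra. rewrite Hq'e, ln_exp.
    replace (p * (1 / p * ln t)) with (ln t) by (field; lra). apply exp_ln; lra. }
  exists q'. split; auto.
  exists (L0 / rpow (1 - q / rpow q' p) (1 / p)).
  rewrite Htq.
  assert (Hc : m < 1 - q / t).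
  { apply (Rmult_lt_reg_r t); [lra|]. unfold Rdiv. rewrite Rmult_minus_distr_r, Rmult_assoc, Rinv_l by lra. nra. }
  set (C := rpow (1 - q / t) (1 / p)).
  assert (HC : 0 < C) by (apply rpow_posv; lra).
  assert (HLC : L0 < C).
  { unfold C. rewrite rpow_pos_eq by lra. rewrite <- (exp_ln L0) by lra. apply exp_increasing.
    assert (Hln : ln m < ln (1 - q / t)) by (apply ln_increasing; lra).
    unfold m in Hln. rewrite rpow_pos_eq, ln_exp in Hln by lra.
    apply (Rmult_lt_reg_l p); [lra|].
    replace (p * (1 / p * ln (1 - q / t))) with (ln (1 - q / t)) by (field; lra). lra. }
  split; [|split].
  - left. apply Rdiv_lt_0_compat; lra.
  - apply (Rmult_lt_reg_r C); auto. unfold Rdiv. rewrite Rmult_assoc, Rinv_l by lra. lra.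
  - unfold C. rewrite <- Htq. apply (p_to_s X d Hd f q p L0 q'); auto; try lra.
Qed.

Lemma s_to_p_all X (d: X->X->R) (Hd : is_metric d) f q1 L :
  0 < q1 < 1 -> 0 <= L -> L < 1 -> lip_s d q1 f L ->
  forall q, 0 < q < 1 -> exists p, 1 <= p /\
      exists L, L < Rpower (1 - q) (1 / p) /\ lip_p d p q f L.
Proof.
  intros Hq1 HL0 HL1 Hf q Hq.
  destruct (pow_lt_1_zero q1) with (y := q) as [N1 HN1]; [rewrite Rabs_right; lra| lra|].
  destruct (pow_lt_1_zero L) with (y := 1 - q) as [N2 HN2]; [rewrite Rabs_right; lra| lra|].
  set (N := S (Nat.max N1 N2)).
  assert (H1 : q1 ^ N <= q).
  { pose proof (HN1 N ltac:(unfold N; lia)). pose proof (Rle_abs (q1 ^ N)). lra. }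
  assert (H2 : L ^ N < 1 - q).
  { pose proof (HN2 N ltac:(unfold N; lia)). pose proof (Rle_abs (L ^ N)). lra. }
  exists (INR N). split. apply (le_INR 1); unfold N; lia.
  exists L. split.
  - unfold Rpower. rewrite <- rpow_pos_eq by lra. apply root_lt; auto. unfold N; lia.
  - apply (s_to_p X d Hd f q1 L q N); auto. unfold N; lia.
Qed.

Theorem mainTheorem12 (X : Type) (d : X -> X -> R) (Hd : is_metric d)
  (f : (nat -> X) -> X) :
  ((exists q, 0 < q < 1 /\ exists L, L < 1 /\ lip_s d q f L) <->
   (exists q p, 0 < q < 1 /\ 1 <= p /\
      exists L, L < Rpower (1 - q) (1 / p) /\ lip_p d p q f L)) /\
  ((exists q p, 0 < q < 1 /\ 1 <= p /\
      exists L, L < Rpower (1 - q) (1 / p) /\ lip_p d p q f L) <->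
   (forall q, 0 < q < 1 -> exists p, 1 <= p /\
      exists L, L < Rpower (1 - q) (1 / p) /\ lip_p d p q f L)).
Proof.
  split; split.
  - intros [q1 [Hq1 [L [HL Hf]]]].
    assert (Hf0 : lip_s d q1 f (Rmax L 0)) by (eapply lip_s_mono; [auto|apply Rmax_l|]; eauto).
    destruct (s_to_p_all X d Hd f q1 (Rmax L 0) Hq1 (Rmax_r _ _)
       ltac:(apply Rmax_lub_lt; lra) Hf0 (1/2) ltac:(lra)) as [p Hp].
    exists (1/2), p. split; [lra|]. exact Hp.
  - intros [q [p [Hq [Hp [L [HL Hf]]]]]].
    destruct (p_to_s_ex X d Hd f q p L Hq Hp HL Hf) as [q' [Hq' [L' [H0 [H1 H2]]]]].
    exists q'. split; auto. exists L'. auto.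
  - intros [q [p [Hq [Hp [L [HL Hf]]]]]].
    destruct (p_to_s_ex X d Hd f q p L Hq Hp HL Hf) as [q' [Hq' [L' [H0 [H1 H2]]]]].
    eapply s_to_p_all; eauto.
  - intros H. destruct (H (1/2) ltac:(lra)) as [p [Hp HL]].
    exists (1/2), p. split; [lra|]. split; auto.
Qed.
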